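(* Let $R_1,R_2$ be rings, $M$ an $(R_1,R_2)$-bimodule and $P$ an $(R_2,R_1)$-bimodule, and let $R=\begin{pmatrix} R_1 & M\\ P & R_2\end{pmatrix}$ be a trivial Morita context, i.e. the context products $M\times P\to R_1$ and $P\times M\to R_2$ are zero ($MP=0$, $PM=0$), with ring structure given by the usual matrix operations. Then $R$ is NJ-symmetric if and only if $R_1$ and $R_2$ are NJ-symmetric.
   Context: Rings are associative with identity. $N(S)$ is the set of nilpotent elements, $J(S)$ the Jacobson radical of a ring $S$. $S$ is NJ-symmetric if for all $a,b,c\in S$, $abc\in N(S)$ implies $bac\in J(S)$. *)

(* Defs.v *)
From HB Require Import structures.
From mathcomp Require Import all_boot all_order all_algebra.
Set Implicit Arguments. Unset Strict Implicit. Unset Printing Implicit Defensive.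
Import GRing.Theory.
Local Open Scope ring_scope.

Definition nilpotent_el (S : pzRingType) (x : S) : Prop := exists n : nat, x ^+ n = 0.

Definition left_ideal (S : pzRingType) (I : S -> Prop) : Prop :=
  [/\ I 0, (forall x y, I x -> I y -> I (x - y)) & (forall r x, I x -> I (r * x))].

Definition maximal_left_ideal (S : pzRingType) (I : S -> Prop) : Prop :=
  [/\ left_ideal I, ~ I 1 &
      forall K : S -> Prop, left_ideal K -> (forall x, I x -> K x) ->
        ~ K 1 -> forall x, K x -> I x].

Definition jacobson_el (S : pzRingType) (x : S) : Prop :=
  forall I : S -> Prop, maximal_left_ideal I -> I x.

Definition NJ_symmetric (S : pzRingType) : Prop :=
  forall a b c : S, nilpotent_el (a * b * c) -> jacobson_el (b * a * c).

Record bimod (R1 R2 : pzRingType) := Bimod {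
  bm_car :> zmodType;
  bm_l : R1 -> bm_car -> bm_car;
  bm_r : bm_car -> R2 -> bm_car;
  bm_lDl : forall a b m, bm_l (a + b) m = bm_l a m + bm_l b m;
  bm_lDr : forall a m n, bm_l a (m + n) = bm_l a m + bm_l a n;
  bm_lA : forall a b m, bm_l (a * b) m = bm_l a (bm_l b m);
  bm_l1 : forall m, bm_l 1 m = m;
  bm_rDl : forall m n s, bm_r (m + n) s = bm_r m s + bm_r n s;
  bm_rDr : forall m s t, bm_r m (s + t) = bm_r m s + bm_r m t;
  bm_rA : forall m s t, bm_r m (s * t) = bm_r (bm_r m s) t;
  bm_r1 : forall m, bm_r m 1 = m;
  bm_lr : forall a m s, bm_l a (bm_r m s) = bm_r (bm_l a m) s
}.

Section Morita.
Variables (R1 R2 : pzRingType) (M : bimod R1 R2) (P : bimod R2 R1).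

(* an element ((a, m), p, b) stands for the matrix [[a, m], [p, b]] *)
Definition morita_car := (R1 * M * P * R2)%type.
HB.instance Definition _ := GRing.Zmodule.on morita_car.

Definition mor_one : morita_car := (1, 0, 0, 1).

(* [[a,m],[p,b]] [[a',m'],[p',b']] = [[aa' + mp', am' + mb'], [pa' + bp', pm' + bb']]
   with the context products mp' and pm' equal to zero *)
Definition mor_mul (x y : morita_car) : morita_car :=
  let: (a, m, p, b) := x in let: (a', m', p', b') := y in
  (a * a', bm_l a m' + bm_r m b', bm_r p a' + bm_l b p', b * b').

Lemma bm_l0 (R S : pzRingType) (N : bimod R S) a : bm_l a (0 : N) = 0.
Proof. by apply: (@addrI _ (bm_l a 0)); rewrite -bm_lDr !addr0. Qed.
Lemma bm_0l (R S : pzRingType) (N : bimod R S) (m : N) : bm_l 0 m = 0.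
Proof. by apply: (@addrI _ (bm_l 0 m)); rewrite -bm_lDl !addr0. Qed.
Lemma bm_r0 (R S : pzRingType) (N : bimod R S) s : bm_r (0 : N) s = 0.
Proof. by apply: (@addrI _ (bm_r (0:N) s)); rewrite -bm_rDl !addr0. Qed.
Lemma bm_0r (R S : pzRingType) (N : bimod R S) (m : N) : bm_r m 0 = 0.
Proof. by apply: (@addrI _ (bm_r m 0)); rewrite -bm_rDr !addr0. Qed.

Lemma mor_mulA : associative mor_mul.
Proof.
move=> [[[a m] p] b] [[[a' m'] p'] b'] [[[a'' m''] p''] b''] /=.
by rewrite mulrA !bm_lDr !bm_rDl bm_lA bm_rA !bm_lr bm_lA bm_rA !addrA mulrA.
Qed.
Lemma mor_mul1r : left_id mor_one mor_mul.
Proof. by move=> [[[a m] p] b] /=; rewrite !mul1r !bm_l1 !bm_r0 add0r addr0. Qed.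
Lemma mor_mulr1 : right_id mor_one mor_mul.
Proof. by move=> [[[a m] p] b] /=; rewrite !mulr1 !bm_r1 !bm_l0 add0r addr0. Qed.
Lemma mor_mulDl : left_distributive mor_mul +%R.
Proof.
move=> [[[a m] p] b] [[[a' m'] p'] b'] [[[a'' m''] p''] b''] /=.
rewrite !mulrDl bm_lDl bm_rDl bm_rDl bm_lDl.
by congr (_, _, _, _); rewrite -!addrA; congr (_ + _); rewrite addrCA.
Qed.
Lemma mor_mulDr : right_distributive mor_mul +%R.
Proof.
move=> [[[a m] p] b] [[[a' m'] p'] b'] [[[a'' m''] p''] b''] /=.
rewrite !mulrDr bm_lDr bm_rDr bm_rDr bm_lDr.
by congr (_, _, _, _); rewrite -!addrA; congr (_ + _); rewrite addrCA.
Qed.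

HB.instance Definition _ := GRing.Zmodule_isPzRing.Build morita_car
  mor_mulA mor_mul1r mor_mulr1 mor_mulDl mor_mulDr.

Definition morita_ring : pzRingType := morita_car.
End Morita.

(* Main.v *)
Require Import Defs.
From HB Require Import structures.
From mathcomp Require Import all_boot all_order all_algebra.
From Stdlib Require Import Classical.
Set Implicit Arguments. Unset Strict Implicit. Unset Printing Implicit Defensive.
Import GRing.Theory.
Local Open Scope ring_scope.

Lemma li_add (S : pzRingType) (I : S -> Prop) x y :
  left_ideal I -> I x -> I y -> I (x + y).
Proof.
case=> I0 Is _ Ix Iy; have := Is _ _ Ix (Is _ _ I0 Iy).
by rewrite sub0r opprK.
Qed.

Lemma max_gen (S : pzRingType) (I : S -> Prop) (x : S) :
  maximal_left_ideal I -> ~ I x -> exists i r, I i /\ 1 = i + r * x.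
Proof.
case=> [[I0 Is Im] I1 Imax] Nx.
pose K y := exists i r, I i /\ y = i + r * x.
have KL : left_ideal K.
  split.
  - by exists 0, 0; rewrite mul0r addr0.
  - move=> _ _ [i [r [Ii ->]]] [i' [r' [Ii' ->]]].
    exists (i - i'), (r - r'); split; first exact: Is.
    by rewrite mulrBl opprD !addrA; congr (_ + _); rewrite addrAC.
  - move=> s _ [i [r [Ii ->]]]; exists (s * i), (s * r); split; first exact: Im.
    by rewrite mulrDr mulrA.
have IK : forall y, I y -> K y by move=> y Iy; exists y, 0; rewrite mul0r addr0.
case: (classic (K 1)) => [[i [r [Ii E]]]|NK1]; first by exists i, r.
exfalso; apply: Nx; apply: (Imax K KL IK NK1).
by exists 0, 1; rewrite mul1r add0r.
Qed.

Lemma J_of_linv (S : pzRingType) (x : S) :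
  (forall r, exists u, u * (1 - r * x) = 1) -> jacobson_el x.
Proof.
move=> H I HI; case: (classic (I x)) => // Nx.
have [i [r [Ii E]]] := max_gen HI Nx.
have [u Hu] := H r.
case: HI => [[_ _ Im] I1 _]; exfalso; apply: I1.
have -> : 1 = u * i by rewrite -Hu E addrK.
exact: Im.
Qed.

Section Mor.
Variables (R1 R2 : pzRingType) (M : bimod R1 R2) (P : bimod R2 R1).
Notation R := (morita_ring M P).
Definition mk (a : R1) (m : M) (p : P) (b : R2) : R := (a, m, p, b).

Lemma mulE (x y : R) : x * y = mor_mul x y. Proof. by []. Qed.

Lemma mul11 (x y : R) : (x * y).1.1.1 = x.1.1.1 * y.1.1.1.
Proof. by case: x => [[[a m] p] b]; case: y => [[[a' m'] p'] b']. Qed.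
Lemma mul22 (x y : R) : (x * y).2 = x.2 * y.2.
Proof. by case: x => [[[a m] p] b]; case: y => [[[a' m'] p'] b']. Qed.

Lemma pow11 (x : R) n : (x ^+ n).1.1.1 = x.1.1.1 ^+ n.
Proof. elim: n => // n IH; by rewrite !exprS mul11 IH. Qed.
Lemma pow22 (x : R) n : (x ^+ n).2 = x.2 ^+ n.
Proof. elim: n => // n IH; by rewrite !exprS mul22 IH. Qed.

Lemma mulD (a a' : R1) (b b' : R2) : mk a 0 0 b * mk a' 0 0 b' = mk (a * a') 0 0 (b * b').
Proof. rewrite mulE /mk /= bm_l0 bm_r0 bm_r0 bm_l0 !addr0. reflexivity. Qed.

Lemma powD (a : R1) (b : R2) n : mk a 0 0 b ^+ n = mk (a ^+ n) 0 0 (b ^+ n).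
Proof. elim: n => // n IH; by rewrite !exprS IH mulD. Qed.

Lemma subE (a a' : R1) (m m' : M) (p p' : P) (b b' : R2) :
  mk a m p b - mk a' m' p' b' = mk (a - a') (m - m') (p - p') (b - b').
Proof. reflexivity. Qed.

Lemma addE (a a' : R1) (m m' : M) (p p' : P) (b b' : R2) :
  mk a m p b + mk a' m' p' b' = mk (a + a') (m + m') (p + p') (b + b').
Proof. reflexivity. Qed.

Lemma offdiag_sq (m m' : M) (p p' : P) : mk 0 m p 0 * mk 0 m' p' 0 = 0.
Proof. rewrite mulE /mk /= bm_0l bm_0r bm_0r bm_0l !mul0r !addr0. reflexivity. Qed.

Lemma mul_offdiag (r : R) (m : M) (p : P) : exists m' p', r * mk 0 m p 0 = mk 0 m' p' 0.
Proof.
case: r => [[[a m1] p1] b]; rewrite mulE /mk /= bm_0r bm_0r !mulr0 addr0 add0r.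
by do 2 eexists.
Qed.

Lemma J_offdiag (m : M) (p : P) : jacobson_el (mk 0 m p 0).
Proof.
apply: J_of_linv => r; exists (1 + r * mk 0 m p 0).
have [m' [p' ->]] := mul_offdiag r m p.
by rewrite mulrDl mul1r mulrBr mulr1 offdiag_sq subr0 addrNK.
Qed.

Lemma J_diag1 (j : R1) : jacobson_el j -> jacobson_el (mk j 0 0 0).
Proof.
move=> Hj I HI.
have HI' := HI; case: HI' => [[I0 Is Im] I1 Imax].
pose I1' a := I (mk a 0 0 0).
case: (classic (I1' 1)) => [H1|N1].
  have -> : mk j 0 0 0 = mk j 0 0 0 * mk 1 0 0 0 by rewrite mulD mulr1 mulr0.
  exact: Im.
apply: (Hj I1'); split.
- split; rewrite /I1'.
  + exact: I0.
  + move=> x y Ix Iy; have := Is _ _ Ix Iy.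
    by rewrite subE !subr0.
  + move=> r x Ix; have := Im (mk r 0 0 0) _ Ix; by rewrite mulD mulr0.
- exact: N1.
move=> K KL IK NK y Ky.
case: (classic (I1' y)) => // Ny.
have [[[[i1 im] ip] i2] [[[[r1 rm] rp] r2] [Ii E]]] := max_gen HI Ny.
rewrite mulE /mk /= bm_l0 bm_0r bm_l0 mulr0 !addr0 in E.
have E1 := congr1 (fun z : R => z.1.1.1) E; have E2 := congr1 (fun z : R => z.1.1.2) E.
simpl in E1, E2. rewrite addr0 in E2.
have : I (mk 1 0 0 0 * (i1, im, ip, i2)) by exact: Im.
rewrite mulE /mk /= mul1r bm_l1 bm_r0 bm_r0 bm_0l mul0r addr0 add0r -E2 => Hi.
exfalso; apply: NK.
rewrite E1.
case: KL => K0 Ks Km.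
apply: li_add => //; first by apply: IK.
by apply: Km.
Qed.

Lemma J_diag2 (j : R2) : jacobson_el j -> jacobson_el (mk 0 0 0 j).
Proof.
move=> Hj I HI.
have HI' := HI; case: HI' => [[I0 Is Im] I1 Imax].
pose I1' a := I (mk 0 0 0 a).
case: (classic (I1' 1)) => [H1|N1].
  have -> : mk 0 0 0 j = mk 0 0 0 j * mk 0 0 0 1 by rewrite mulD mulr1 mulr0.
  exact: Im.
apply: (Hj I1'); split.
- split; rewrite /I1'.
  + exact: I0.
  + move=> x y Ix Iy; have := Is _ _ Ix Iy.
    by rewrite subE !subr0.
  + move=> r x Ix; have := Im (mk 0 0 0 r) _ Ix; by rewrite mulD mulr0.
- exact: N1.
move=> K KL IK NK y Ky.
case: (classic (I1' y)) => // Ny.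
have [[[[i1 im] ip] i2] [[[[r1 rm] rp] r2] [Ii E]]] := max_gen HI Ny.
rewrite mulE /mk /= mulr0 bm_l0 bm_0r bm_l0 !addr0 in E.
have E1 := congr1 (fun z : R => z.2) E; have E2 := congr1 (fun z : R => z.1.2) E.
simpl in E1, E2. rewrite addr0 in E2.
have : I (mk 0 0 0 1 * (i1, im, ip, i2)) by exact: Im.
rewrite mulE /mk /= mul1r bm_l1 bm_r0 bm_r0 bm_0l mul0r addr0 add0r -E2 => Hi.
exfalso; apply: NK.
rewrite E1.
case: KL => K0 Ks Km.
apply: li_add => //; first by apply: IK.
by apply: Km.
Qed.

Lemma J_lift (x : R) : jacobson_el x.1.1.1 -> jacobson_el x.2 -> jacobson_el x.
Proof.
case: x => [[[a m] p] b] /= Ha Hb I HI.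
have -> : ((a, m, p, b) : R) = mk a 0 0 0 + mk 0 m p 0 + mk 0 0 0 b.
  by rewrite !addE !addr0 !add0r.
have IL : left_ideal I by case: HI.
apply: li_add => //; first apply: li_add => //.
- exact: J_diag1.
- exact: J_offdiag.
- exact: J_diag2.
Qed.

Lemma J_down1 (x : R) : jacobson_el x -> jacobson_el x.1.1.1.
Proof.
move=> Hx I HI; have HI' := HI; case: HI' => [[I0 Is Im] I1 Imax].
pose I' (z : R) := I z.1.1.1.
apply: (Hx I'); split.
- split; rewrite /I' //.
  + by move=> [[[a m] p] b] [[[a' m'] p'] b'] /=; exact: Is.
  + by move=> r z; rewrite mul11; exact: Im.
- exact: I1.
move=> K KL IK NK z Kz.
have KL' := KL; case: KL' => K0 Ks Km.
pose K1 a := exists y, K y /\ y.1.1.1 = a.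
apply: (Imax K1); last by exists z.
- split.
  + by exists 0.
  + move=> _ _ [y [Ky <-]] [y' [Ky' <-]]; exists (y - y'); split; first exact: Ks.
    by case: y {Ky} => [[[? ?] ?] ?]; case: y' {Ky'} => [[[? ?] ?] ?].
  + move=> r _ [y [Ky <-]]; exists (mk r 0 0 0 * y); split; first exact: Km.
    by rewrite mul11.
- move=> a Ia; exists (mk a 0 0 0); split => //; apply: IK; exact: Ia.
- move=> [[[[a m] p] b] [Ky /= Ea]]; apply: NK.
  have H1 : K (mk 1 0 0 0 * (a, m, p, b)) by exact: Km.
  have H2 : K (mk 0 (- m) 0 1) by apply: IK; exact: I0.
  have := li_add KL H1 H2.
  rewrite mulE /mk /= Ea mul1r bm_l1 !bm_r0 bm_0l mul0r !addr0.
  rewrite (addE 1 0 m (- m) 0 0 0 1); suff -> : (1 : R) = mk (1 + 0) (m - m) (0 + 0) (0 + 1) by []. 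
  by rewrite /mk !addr0 add0r subrr.
Qed.

Lemma J_down2 (x : R) : jacobson_el x -> jacobson_el x.2.
Proof.
move=> Hx I HI; have HI' := HI; case: HI' => [[I0 Is Im] I1 Imax].
pose I' (z : R) := I z.2.
apply: (Hx I'); split.
- split; rewrite /I' //.
  + by move=> [[[a m] p] b] [[[a' m'] p'] b'] /=; exact: Is.
  + by move=> r z; rewrite mul22; exact: Im.
- exact: I1.
move=> K KL IK NK z Kz.
have KL' := KL; case: KL' => K0 Ks Km.
pose K1 a := exists y, K y /\ y.2 = a.
apply: (Imax K1); last by exists z.
- split.
  + by exists 0.
  + move=> _ _ [y [Ky <-]] [y' [Ky' <-]]; exists (y - y'); split; first exact: Ks.
    by case: y {Ky} => [[[? ?] ?] ?]; case: y' {Ky'} => [[[? ?] ?] ?].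
  + move=> r _ [y [Ky <-]]; exists (mk 0 0 0 r * y); split; first exact: Km.
    by rewrite mul22.
- move=> a Ia; exists (mk 0 0 0 a); split => //; apply: IK; exact: Ia.
- move=> [[[[a m] p] b] [Ky /= Ea]]; apply: NK.
  have H1 : K (mk 0 0 0 1 * (a, m, p, b)) by exact: Km.
  have H2 : K (mk 1 0 (- p) 0) by apply: IK; exact: I0.
  have := li_add KL H1 H2.
  rewrite mulE /mk /= Ea mul1r bm_l1 !bm_r0 bm_0l mul0r !add0r.
  rewrite (addE 0 1 0 0 p (- p) 1 0); suff -> : (1 : R) = mk (0 + 1) (0 + 0) (p - p) (1 + 0) by [].
  by rewrite /mk !addr0 add0r subrr.
Qed.
End Mor.

Theorem proposition2p21 (R1 R2 : pzRingType) (M : bimod R1 R2) (P : bimod R2 R1) :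
  NJ_symmetric (morita_ring M P) <-> (NJ_symmetric R1 /\ NJ_symmetric R2).
Proof.
split.
- move=> H; split.
  + move=> a b c [n Hn].
    have := H (@mk _ _ M P a 0 0 0) (@mk _ _ M P b 0 0 0) (@mk _ _ M P c 0 0 0).
    rewrite !mulD !mulr0 => /(_ _) HJ.
    apply: (J_down1 (x := @mk _ _ M P (b * a * c) 0 0 0)); apply: HJ.
    exists n.+1; rewrite powD !exprS Hn mulr0 mul0r.
    reflexivity.
  + move=> a b c [n Hn].
    have := H (@mk _ _ M P 0 0 0 a) (@mk _ _ M P 0 0 0 b) (@mk _ _ M P 0 0 0 c).
    rewrite !mulD !mulr0 => /(_ _) HJ.
    apply: (J_down2 (x := @mk _ _ M P 0 0 0 (b * a * c))); apply: HJ.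
    exists n.+1; rewrite powD !exprS Hn mulr0 mul0r.
    reflexivity.
- move=> [H1 H2] A B C [n Hn]; apply: J_lift.
  + rewrite !mul11; apply: H1; exists n.
    by rewrite -!mul11 -pow11 Hn.
  + rewrite !mul22; apply: H2; exists n.
    by rewrite -!mul22 -pow22 Hn.
Qed.
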